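(* Let $A$ be a set of integers, each at least $3$, let $A_e$ be the set of even elements of $A$, and let $k\ge 2$ with $2k\notin A$. Then, as $n\to\infty$, $$ex(n,C_{2k},\mathcal C_A)=\Theta\big(ex(n,C_{2k},\mathcal C_{A_e})\big).$$
   Context: $C_k$ denotes the cycle with $k$ vertices; for a set $B$ of integers each at least 3, $\mathcal C_B=\{C_b:b\in B\}$. For a graph $H$ and a family of graphs $\mathcal F$, $ex(n,H,\mathcal F)$ is the maximum number of subgraphs isomorphic to $H$ in an $n$-vertex graph containing no member of $\mathcal F$ as a subgraph. *)

(* Defs.v *)
From mathcomp Require Import all_boot.
From mathcomp Require Import boolp.
Set Implicit Arguments. Unset Strict Implicit. Unset Printing Implicit Defensive.

Definition is_graph (T : finType) (E : {set {set T}}) : bool :=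
  [forall e in E, #|e| == 2].

Definition is_cycle_edgeset (T : finType) (L : nat) (S : {set {set T}}) : bool :=
  (3 <= L) &&
  [exists f : {ffun 'I_L -> T},
     injectiveb f && (S == [set [set f i; f (ordS i)] | i : 'I_L])].

(* Number of subgraphs of E isomorphic to C_L (a copy of a cycle is
   determined by its edge set). *)
Definition num_cycles (T : finType) (L : nat) (E : {set {set T}}) : nat :=
  #|[set S : {set {set T}} | (S \subset E) && is_cycle_edgeset L S]|.

Definition has_cycle (T : finType) (b : nat) (E : {set {set T}}) : bool :=
  [exists S : {set {set T}}, (S \subset E) && is_cycle_edgeset b S].

Definition cycle_free (T : finType) (B : pred nat) (E : {set {set T}}) : Prop :=
  forall b, B b -> ~~ has_cycle b E.

Definition ex_cycles (n L : nat) (B : pred nat) : nat :=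
  \max_(E : {set {set 'I_n}} | is_graph E && asbool (cycle_free B E))
     num_cycles L E.

Definition even_part (B : pred nat) : pred nat := [pred a | B a && ~~ odd a].

(* Main.v *)
Require Import Defs.
From mathcomp Require Import all_boot.
From mathcomp Require Import zify.
From mathcomp Require Import boolp.
Set Implicit Arguments. Unset Strict Implicit. Unset Printing Implicit Defensive.

Lemma card2I (T : finType) (a b : T) (X : {set T}) : a != b ->
  (#|[set a; b] :&: X| == 1) = ((a \in X) != (b \in X)).
Proof.
move=> nab; have nba : b != a by rewrite eq_sym.
have E: forall Y : {set T}, (forall x, (x \in Y) = ((x == a) && (a \in X)) || ((x == b) && (b \in X))) ->
   [set a; b] :&: X = Y.
  move=> Y hY; apply/setP => x; rewrite hY !inE.
  case/boolP: (x == a) => xa; case/boolP: (x == b) => xb /=;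
   rewrite ?(eqP xa) ?(eqP xb) ?eqxx ?(negbTE nab) ?(negbTE nba) ?andbF ?orbF ?andbT //=.
  by move: nab; rewrite -(eqP xa) -(eqP xb) eqxx.
case Ha: (a \in X); case Hb: (b \in X) => /=.
- rewrite (E [set a; b]); first by rewrite cards2 nab.
  by move=> x; rewrite !inE Ha Hb ?andbT ?andbF ?orbF.
- rewrite (E [set a]); first by rewrite cards1.
  by move=> x; rewrite !inE Ha Hb ?andbT ?andbF ?orbF.
- rewrite (E [set b]); first by rewrite cards1.
  by move=> x; rewrite !inE Ha Hb ?andbT ?andbF ?orbF.
- rewrite (E set0); first by rewrite cards0.
  by move=> x; rewrite !inE Ha Hb ?andbT ?andbF ?orbF.
Qed.

Lemma ordS_neq L (i : 'I_L) : 2 <= L -> i != ordS i.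
Proof.
move=> hL; apply/eqP => /(congr1 val) /= h.
have hi := ltn_ord i.
move: h; case: (ltngtP i.+1 L) => h1.
- by rewrite modn_small // => /eqP; rewrite eqn_leq ltnn andbF.
- by move: h1; rewrite ltnNge hi.
- move=> hh; have : i.+1 %% i.+1 = 0 by rewrite modnn.
  by rewrite {2}h1 -hh => h0; move: h1 hL; rewrite h0 => <-.
Qed.

Lemma odd_ordS L (i : 'I_L) : ~~ odd L -> odd (ordS i) = ~~ odd i.
Proof.
move=> hL /=; have hi := ltn_ord i.
move: hi; rewrite leq_eqVlt => /orP [/eqP h1|h1].
- rewrite h1 modnn /=.
  have : ~~ odd i.+1 by rewrite h1.
  by rewrite /= negbK => ->.
- by rewrite modn_small.
Qed.

Lemma no_odd_alt (T : finType) L (f : 'I_L -> T) (X : {set T}) : odd L ->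
  (forall i, (f i \in X) != (f (ordS i) \in X)) -> False.
Proof.
case: L f => [//|m] f hodd H.
set g := fun j => f (inord j) \in X.
have step : forall j, j < m -> g j.+1 = ~~ g j.
  move=> j hj; have := H (inord j).
  have -> : ordS (inord j : 'I_m.+1) = inord j.+1.
    apply: val_inj; rewrite /= !inordK ?modn_small //; by apply: ltnW.
  by rewrite /g; case: (f (inord j) \in X); case: (f (inord j.+1) \in X).
have cl : forall j, j <= m -> g j = g 0 (+) odd j.
  elim=> [|j IH] hj; first by rewrite addbF.
  by rewrite step // IH ?(ltnW hj) //= addbN.
have := H (inord m).
have -> : ordS (inord m : 'I_m.+1) = inord 0.
  by apply: val_inj; rewrite /= !inordK // modnn.
rewrite -/(g m) -/(g 0) cl //.
by move: hodd => /= /negbTE ->; rewrite addbF eqxx.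
Qed.

Definition cut (T : finType) (E : {set {set T}}) (X : {set T}) : {set {set T}} :=
  [set e in E | #|e :&: X| == 1].

Lemma cut_sub (T : finType) (E : {set {set T}}) X : cut E X \subset E.
Proof. by apply/subsetP => e; rewrite inE => /andP []. Qed.

Lemma cut_graph (T : finType) (E : {set {set T}}) X : is_graph E -> is_graph (cut E X).
Proof.
move=> /forallP hE; apply/forallP => e; apply/implyP => he.
by have /implyP := hE e; apply; move: he; rewrite inE => /andP [].
Qed.

Lemma cut_free (T : finType) (B : pred nat) (E : {set {set T}}) X :
  cycle_free (even_part B) E -> cycle_free B (cut E X).
Proof.
move=> hE b hb; apply/negP => /existsP [S /andP [sub cyc]].
move: (cyc) => /andP [h3 /existsP [f /andP [/injectiveP inj /eqP hS]]].
case/boolP: (odd b) => hodd.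
  apply: (@no_odd_alt _ b f X hodd) => i.
  have neq : f i != f (ordS i).
    apply/eqP => /inj /eqP; apply/negP; apply: ordS_neq; exact: ltnW.
  rewrite -card2I //.
  have : [set f i; f (ordS i)] \in S by rewrite hS; apply: imset_f.
  by move/(subsetP sub); rewrite inE => /andP [].
have := hE b; rewrite /even_part /= hb hodd => /(_ isT) /negP; apply.
apply/existsP; exists S; rewrite cyc andbT.
exact: subset_trans sub (cut_sub E X).
Qed.

Lemma cycle_cuts n L (E S : {set {set 'I_n}}) : ~~ odd L -> S \subset E ->
  is_cycle_edgeset L S -> L <= n /\ 2 ^ (n - L) <= #|[set X | S \subset cut E X]|.
Proof.
move=> hev sub /andP [h3 /existsP [f /andP [/injectiveP inj /eqP hS]]].
set V := [set f i | i : 'I_L].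
set V0 := [set f i | i in [set i : 'I_L | ~~ odd i]].
have cV : #|V| = L by rewrite card_imset // card_ord.
have cVC : #|~: V| = n - L.
  have h := cardsC V; rewrite card_ord cV in h; lia.
have hLn : L <= n by have := max_card V; rewrite card_ord cV.
split=> //.
have memX : forall Y : {set 'I_n}, Y \subset ~: V -> forall j, (f j \in Y :|: V0) = ~~ odd j.
  move=> Y hY j; rewrite in_setU mem_imset // inE.
  have -> : (f j \in Y) = false.
    apply/negP => /(subsetP hY); rewrite inE imset_f //.
  by [].
rewrite -cVC -card_powerset.
have -> : #|powerset (~: V)| = #|[set Y :|: V0 | Y in powerset (~: V)]|.
  apply/esym/card_in_imset => Y1 Y2; rewrite !inE => h1 h2 e.
  have key : forall Y : {set 'I_n}, Y \subset ~: V -> Y = (Y :|: V0) :&: ~: V.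
    move=> Y hY; apply/setP => x; rewrite !inE.
    case/boolP: (x \in Y) => xY /=.
      by have := subsetP hY x xY; rewrite inE.
    case/boolP: (x \in V0) => //= /imsetP [i _ ->]; by rewrite imset_f.
  by rewrite (key _ h1) (key _ h2) e.
apply: subset_leq_card; apply/subsetP => X /imsetP [Y]; rewrite inE => hY ->.
apply/subsetP => e he; rewrite inE (subsetP sub _ he) /=.
move: he; rewrite hS => /imsetP [i _ ->].
rewrite card2I; last first.
  apply/eqP => /inj /eqP; apply/negP; apply: ordS_neq; exact: ltnW.
have hY2 : Y \subset ~: V by rewrite inE in hY.
rewrite (memX _ hY2) (memX _ hY2) odd_ordS // negbK; by case: (odd i).
Qed.

Lemma card_sumA (T : finType) (A : {set T}) (P : pred T) :
  #|[set x in A | P x]| = \sum_(x in A) P x.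
Proof.
rewrite -sum1_card big_mkcond [RHS]big_mkcond; apply: eq_bigr => x _.
by rewrite !inE; case: (x \in A); case: (P x).
Qed.

Lemma card_sumT (T : finType) (P : pred T) :
  #|[set x | P x]| = \sum_x P x.
Proof.
rewrite -sum1_card big_mkcond; apply: eq_bigr => x _.
by rewrite !inE; case: (P x).
Qed.

Lemma main n L (B : pred nat) (E : {set {set 'I_n}}) : ~~ odd L -> is_graph E ->
  cycle_free (even_part B) E -> num_cycles L E <= 2 ^ L * ex_cycles n L B.
Proof.
move=> hev hg hfree.
set C := [set S : {set {set 'I_n}} | (S \subset E) && is_cycle_edgeset L S].
have numC : num_cycles L E = #|C| by [].
rewrite numC.
case: (set_0Vmem C) => [-> | [S0 hS0]]; first by rewrite cards0.
have hLn : L <= n.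
  by move: hS0; rewrite inE => /andP [h1 h2]; case: (cycle_cuts hev h1 h2).
set ex := ex_cycles n L B.
have up : \sum_(X : {set 'I_n}) num_cycles L (cut E X) <= 2 ^ n * ex.
  apply: (@leq_trans (\sum_(X : {set 'I_n}) ex)).
    apply: leq_sum => X _; rewrite /ex /ex_cycles.
    apply: (@leq_bigmax_cond _ (fun E => is_graph E && asbool (cycle_free B E)) (num_cycles L) (cut E X)).
    by rewrite cut_graph //=; apply/asboolP; apply: cut_free.
  by rewrite big_const iter_addn addn0 -cardsT -powersetT card_powerset cardsT card_ord mulnC.
have low : #|C| * 2 ^ (n - L) <= \sum_(X : {set 'I_n}) num_cycles L (cut E X).
  have e1 : forall X, num_cycles L (cut E X) = \sum_(S in C) (S \subset cut E X).
    move=> X; rewrite -card_sumA /num_cycles; apply: eq_card => S; rewrite !inE.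
    case/boolP: (S \subset cut E X) => h //=; last by rewrite andbF.
    by rewrite (subset_trans h (cut_sub E X)) andbT.
  rewrite (eq_bigr _ (fun X _ => e1 X)) exchange_big /=.
  rewrite -sum_nat_const; apply: leq_sum => S; rewrite inE => /andP [h1 h2].
  rewrite -card_sumT.
  by have [_ ] := cycle_cuts hev h1 h2.
have := leq_trans low up.
have e2 : 2 ^ n = 2 ^ (n - L) * 2 ^ L by rewrite -expnD subnK.
rewrite e2 -mulnA mulnC.
by rewrite leq_pmul2l ?expn_gt0.
Qed.

Theorem lemma1 (A : pred nat) (k : nat)
  (hA : forall a, A a -> 3 <= a) (hk : 2 <= k) (h2k : ~~ A (2 * k)) :
  exists c : nat, 0 < c /\ exists N : nat, forall n : nat, N <= n ->
    ex_cycles n (2 * k) (even_part A) <= c * ex_cycles n (2 * k) A /\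
    ex_cycles n (2 * k) A <= c * ex_cycles n (2 * k) (even_part A).
Proof.
exists (2 ^ (2 * k)); split; first by rewrite expn_gt0.
exists 0 => n _; split.
  apply/bigmax_leqP => E /andP [hg /asboolP hf].
  by apply: main => //; rewrite oddM.
apply: (@leq_trans (ex_cycles n (2 * k) (even_part A))); last by rewrite leq_pmull ?expn_gt0.
apply/bigmax_leqP => E /andP [hg /asboolP hf].
apply: (@leq_bigmax_cond _ (fun E => is_graph E && asbool (cycle_free (even_part A) E)) (num_cycles (2 * k)) E).
rewrite hg /=; apply/asboolP => b /andP [hb _]; exact: hf.
Qed.
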